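(* Let $\mathfrak G$ be a Grassmann semialgebra over a commutative semiring $\mathcal A$ and an $\mathcal A$-module $V$. For any finitely many $\alpha_i\in\mathcal A$ and $a_i\in V$, $$\Bigl(\sum_i\alpha_ia_i\Bigr)^2\succeq_\circ\sum_i\alpha_i^2a_i^2 .$$
   Context: A Grassmann (exterior) semialgebra over $\mathcal A$ and $V$ is an associative $\mathcal A$-semialgebra $\mathfrak G$ (product written $\wedge$, $x^2=x\wedge x$) generated by $\mathcal A$ and $V$; $\mathfrak G_{\ge2}$ is the submodule generated by products of at least two elements of $V$; it carries a negation map $(-)$ on $\mathfrak G_{\ge2}$ (an additive bijection of order $\le2$ commuting with scalars) with $v_1\wedge v_2=(-)(v_2\wedge v_1)$ for all $v_1,v_2\in V$. A quasi-zero is an element $a+((-)a)$, and $a_1\succeq_\circ a_0$ means $a_1=a_0+d$ with $d$ a quasi-zero. *)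

(* Defs.v *)
From HB Require Import structures.
From mathcomp Require Import all_boot all_order all_algebra.
Set Implicit Arguments. Unset Strict Implicit. Unset Printing Implicit Defensive.
Import Order.TTheory GRing.Theory Num.Theory.
Local Open Scope ring_scope.

Section Grassmann.
Variables (A : comPzSemiRingType) (G : semiAlgType A).

Definition is_submodule (V : G -> Prop) : Prop :=
  [/\ V 0, (forall x y, V x -> V y -> V (x + y)) &
      (forall (c : A) x, V x -> V (c *: x))].

Inductive gen_by (V : G -> Prop) : G -> Prop :=
  | gen_scal (c : A) : gen_by V (c%:A)
  | gen_V v : V v -> gen_by V v
  | gen_add x y : gen_by V x -> gen_by V y -> gen_by V (x + y)
  | gen_mul x y : gen_by V x -> gen_by V y -> gen_by V (x * y)
  | gen_scale (c : A) x : gen_by V x -> gen_by V (c *: x).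

Definition generates (V : G -> Prop) : Prop := forall x : G, gen_by V x.

Inductive G_ge2 (V : G -> Prop) : G -> Prop :=
  | ge2_prod (s : seq G) : (2 <= size s)%N -> (forall v, v \in s -> V v) ->
                           G_ge2 V (\prod_(v <- s) v)
  | ge2_zero : G_ge2 V 0
  | ge2_add x y : G_ge2 V x -> G_ge2 V y -> G_ge2 V (x + y)
  | ge2_scale (c : A) x : G_ge2 V x -> G_ge2 V (c *: x).

(* neg is a negation map on G_{>=2}: an additive map G_{>=2} -> G_{>=2},
   of order <= 2 (hence a bijection of G_{>=2}), commuting with scalars,
   with v1 * v2 = (-)(v2 * v1) for v1, v2 in V. *)
Definition negation_map (V : G -> Prop) (neg : G -> G) : Prop :=
  (forall x, G_ge2 V x -> G_ge2 V (neg x)) /\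
  neg 0 = 0 /\
  (forall x y, G_ge2 V x -> G_ge2 V y -> neg (x + y) = neg x + neg y) /\
  (forall x, G_ge2 V x -> neg (neg x) = x) /\
  (forall (c : A) x, G_ge2 V x -> neg (c *: x) = c *: neg x) /\
  (forall v1 v2, V v1 -> V v2 -> v1 * v2 = neg (v2 * v1)).

Definition quasi_zero (V : G -> Prop) (neg : G -> G) (d : G) : Prop :=
  exists2 b, G_ge2 V b & d = b + neg b.

Definition succeq_circ (V : G -> Prop) (neg : G -> G) (a1 a0 : G) : Prop :=
  exists2 d, quasi_zero V neg d & a1 = a0 + d.

End Grassmann.

(* Main.v *)
Require Import Defs.
From HB Require Import structures.
From mathcomp Require Import all_boot all_order all_algebra.
Import GRing.Theory.
Local Open Scope ring_scope.

Lemma qz_add (A : comPzSemiRingType) (G : semiAlgType A)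
  (V : G -> Prop) (neg : G -> G) (hneg : negation_map V neg) d1 d2 :
  quasi_zero V neg d1 -> quasi_zero V neg d2 -> quasi_zero V neg (d1 + d2).
Proof.
case: hneg => _ [_ [hadd _]].
case=> b1 h1 ->; case=> b2 h2 ->.
exists (b1 + b2); first exact: ge2_add.
rewrite hadd //.
by rewrite -!addrA; congr (_ + _); rewrite addrC -!addrA; congr (_ + _); rewrite addrC.
Qed.

Theorem mainTheorem8 (A : comPzSemiRingType) (G : semiAlgType A)
  (V : G -> Prop) (neg : G -> G)
  (hV : is_submodule V) (hgen : generates V) (hneg : negation_map V neg)
  (n : nat) (alpha : 'I_n -> A) (a : 'I_n -> G) (ha : forall i, V (a i)) :
  succeq_circ V neg ((\sum_(i < n) alpha i *: a i) ^+ 2)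
                    (\sum_(i < n) (alpha i ^+ 2) *: (a i ^+ 2)).
Proof.
have [hV0 hVD hVZ] := hV.
have hcomm := hneg.2.2.2.2.2.
elim: n alpha a ha => [|n IH] alpha a ha.
  rewrite !big_ord0; exists 0; last by rewrite expr2 mulr0 addr0.
  by exists 0; [exact: ge2_zero | rewrite hneg.2.1 addr0].
rewrite !big_ord_recr /=.
set x := alpha ord_max *: a ord_max.
have [d hd hS] := IH (fun i => alpha (widen_ord (leqnSn n) i))
   (fun i => a (widen_ord (leqnSn n) i)) (fun i => ha _).
move: hS.
set S := \sum_(i < n) _.
set T := \sum_(i < n) _.
move=> hS.
have VS : V S.
  rewrite /S; elim/big_ind: _ => //; move=> i _; exact: hVZ.
have Vx : V x by exact: hVZ.
have qx : quasi_zero V neg (x * S + S * x).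
  exists (x * S); last by rewrite (hcomm S x).
  have := @ge2_prod A G V [:: x; S] isT.
  rewrite !big_cons big_nil mulr1; apply.
  by move=> v; rewrite !inE => /orP[/eqP->|/eqP->].
exists (d + (x * S + S * x)); first exact: qz_add.
have -> : (alpha ord_max ^+ 2) *: a ord_max ^+ 2 = x ^+ 2.
  by rewrite /x !expr2 -scalerAl -scalerAr scalerA.
have -> : (S + x) ^+ 2 = S ^+ 2 + (x * S + S * x) + x ^+ 2.
  rewrite !expr2 mulrDl !mulrDr !addrA; congr (_ + _).
  by rewrite -!addrA; congr (_ + _); rewrite addrC.
rewrite hS.
rewrite -!addrA; congr (_ + _).
rewrite [RHS]addrC -!addrA; congr (_ + _); rewrite addrC addrA //.
Qed.
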